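(* Every simple Yetter-Drinfeld module $V$ over $H=B(n,w,\gamma)$ is finite-dimensional.
   Context: $\Bbbk$ is an algebraically closed field of characteristic $0$; $n,w$ are positive integers and $\gamma\in\Bbbk$ is a primitive $n$-th root of unity. $H=B(n,w,\gamma)$ is the Hopf algebra generated by $x^{\pm1},g,y$ with relations $xx^{-1}=x^{-1}x=1$, $xg=gx$, $xy=yx$, $yg=\gamma gy$, $y^n=1-x^w=1-g^n$, with $\Delta(x)=x\otimes x$, $\Delta(g)=g\otimes g$, $\Delta(y)=y\otimes g+1\otimes y$, $\varepsilon(x)=\varepsilon(g)=1$, $\varepsilon(y)=0$, $S(x)=x^{-1}$, $S(g)=g^{-1}$, $S(y)=-yg^{-1}$. A (left-left) Yetter-Drinfeld module over $H$ is a left $H$-module and left $H$-comodule $(V,\cdot,\delta)$, $\delta(v)=v_{(-1)}\otimes v_{(0)}$, such that $\delta(h\cdot v)=h_{(1)}v_{(-1)}S(h_{(3)})\otimes h_{(2)}\cdot v_{(0)}$ for all $h\in H$, $v\in V$; simple means no nonzero proper Yetter-Drinfeld submodules. *)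

(* Defs.v *)
From HB Require Import structures.
From mathcomp Require Import all_boot all_order all_algebra.
Set Implicit Arguments. Unset Strict Implicit. Unset Printing Implicit Defensive.
Import Order.TTheory GRing.Theory Num.Theory.
Local Open Scope ring_scope.

(* The Hopf algebra H = B(n,w,gamma), realised concretely on its PBW basis   *)
(*     x^i g^j y^k,   i : int,  0 <= j < n,  0 <= k < n.                     *)
(* An element of a vector space with basis T is represented by a formal     *)
(* linear combination  s : seq (K * T)  (unnormalised); its coefficient at   *)
(* a basis vector t is  coef s t.                                            *)

Section FormalSums.
Variable K : fieldType.

Definition coef (T : eqType) (s : seq (K * T)) (t : T) : K :=
  \sum_(p <- s | p.2 == t) p.1.

Definition fmul (T : Type) (mB : T -> T -> seq (K * T)) (s t : seq (K * T)) :
    seq (K * T) :=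
  flatten [seq flatten [seq [seq (p.1 * q.1 * r.1, r.2) | r <- mB p.2 q.2]
                       | q <- t] | p <- s].

Definition fscale (T : Type) (a : K) (s : seq (K * T)) : seq (K * T) :=
  [seq (a * p.1, p.2) | p <- s].

Definition fexp (T : Type) (mB : T -> T -> seq (K * T)) (one s : seq (K * T))
    (m : nat) : seq (K * T) :=
  iter m (fmul mB s) one.

Definition ftens (T U : Type) (s : seq (K * T)) (t : seq (K * U)) :
    seq (K * (T * U)) :=
  flatten [seq [seq (p.1 * q.1, (p.2, q.2)) | q <- t] | p <- s].

End FormalSums.

Section HopfB.
Variables (K : fieldType) (n : nat) (hn : (0 < n)%N) (w : nat) (gamma : K).

(* basis index (i, j, k) stands for x^i g^j y^k *)
Definition Bbasis : Type := (int * 'I_n * 'I_n)%type.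

Definition ordm (m : nat) : 'I_n := Ordinal (ltn_pmod m hn).

(* normal form of the word x^a g^b y^c (any a : int, b c : nat), using
   g^n = x^w and y^n = 1 - x^w (x central, y commutes with x):
   x^a g^b y^c = \sum_(t <= q) (-1)^t C(q,t) x^(a + w (b/n) + w t) g^(b%n) y^(c%n),
   where q = c / n. *)
Definition mono (a : int) (b c : nat) : seq (K * Bbasis) :=
  [seq ((-1) ^+ t * ('C(c %/ n, t))%:R,
        (a + (w * (b %/ n))%:Z + (w * t)%:Z, ordm b, ordm c))
  | t <- iota 0 (c %/ n).+1].

(* product of basis vectors, using y g = gamma g y:
   (x^i g^j y^k)(x^i' g^j' y^k') = gamma^(k j') x^(i+i') g^(j+j') y^(k+k') *)
Definition mulB (b b' : Bbasis) : seq (K * Bbasis) :=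
  let: (i, j, k) := b in let: (i', j', k') := b' in
  fscale (gamma ^+ (k * j')) (mono (i + i') (j + j') (k + k')).

Definition mulH := fmul mulB.
Definition bas (b : Bbasis) : seq (K * Bbasis) := [:: (1, b)].
Definition oneH := mono 0 0 0.
Definition xpowH (i : int) := mono i 0 0.
Definition gH := mono 0 1 0.
Definition yH := mono 0 0 1.
Definition expH (s : seq (K * Bbasis)) (m : nat) := fexp mulB oneH s m.

Definition mulBB (p q : Bbasis * Bbasis) : seq (K * (Bbasis * Bbasis)) :=
  ftens (mulB p.1 q.1) (mulB p.2 q.2).
Definition oneHH := ftens oneH oneH.
Definition expHH (s : seq (K * (Bbasis * Bbasis))) (m : nat) :=
  fexp mulBB oneHH s m.

Definition DeltaX (i : int) := ftens (xpowH i) (xpowH i).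
Definition DeltaG := ftens gH gH.
Definition DeltaY := ftens yH gH ++ ftens oneH yH.

Definition DeltaB (b : Bbasis) : seq (K * (Bbasis * Bbasis)) :=
  let: (i, j, k) := b in
  fmul mulBB (fmul mulBB (DeltaX i) (expHH DeltaG j)) (expHH DeltaY k).

(* (Delta (x) id) Delta, i.e. h_(1) (x) h_(2) (x) h_(3) *)
Definition Delta2B (b : Bbasis) : seq (K * (Bbasis * Bbasis * Bbasis)) :=
  flatten [seq [seq (p.1 * q.1, (q.2.1, q.2.2, p.2.2)) | q <- DeltaB p.2.1]
          | p <- DeltaB b].

Definition epsB (b : Bbasis) : K := if (val b.2 == 0)%N then 1 else 0.

(* antipode: S(x) = x^-1, S(g) = g^-1 = x^-w g^(n-1), S(y) = - y g^-1;
   S(x^i g^j y^k) = S(y)^k S(g)^j S(x)^i *)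
Definition SgH := mono (- (w%:Z)) n.-1 0.
Definition SyH := fscale (-1) (mulH yH SgH).
Definition SB (b : Bbasis) : seq (K * Bbasis) :=
  let: (i, j, k) := b in
  mulH (mulH (expH SyH k) (expH SgH j)) (xpowH (- i)).

(* Left-left Yetter-Drinfeld modules over H.                                 *)
(* The action is given by the (linear) action  rho b  of each basis vector;  *)
(* the coaction by its components: delta(v) = \sum_b b (x) delta b v, where  *)
(* for each v only finitely many  delta b v  are nonzero.                    *)

Definition fin_supp (V : lmodType K) (d : Bbasis -> V -> V) (v : V)
    (s : seq Bbasis) : Prop :=
  uniq s /\ forall b, b \notin s -> d b v = 0.

Record YDmod (V : lmodType K) := {
  rho : Bbasis -> V -> V;
  delta : Bbasis -> V -> V;
  rho_lin : forall b, linear (rho b);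
  delta_lin : forall b, linear (delta b);
  rho_one : forall v, rho (0, ordm 0, ordm 0) v = v;
  rho_mul : forall b b' v,
    rho b (rho b' v) = \sum_(p <- mulB b b') p.1 *: rho p.2 v;
  delta_fin : forall v, exists s, fin_supp delta v s;
  delta_coass : forall v s, fin_supp delta v s -> forall c d,
    delta d (delta c v) = \sum_(b <- s) coef (DeltaB b) (c, d) *: delta b v;
  delta_counit : forall v s, fin_supp delta v s ->
    \sum_(b <- s) epsB b *: delta b v = v;
  (* Yetter-Drinfeld compatibility, for h = a a basis vector:
     delta(a.v) = a_(1) v_(-1) S(a_(3)) (x) a_(2).v_(0) *)
  yd_compat : forall a v s, fin_supp delta v s -> forall c,
    delta c (rho a v) =
    \sum_(t <- Delta2B a) \sum_(b <- s)
       (t.1 * coef (mulH (mulH (bas t.2.1.1) (bas b)) (SB t.2.2)) c)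
         *: rho t.2.1.2 (delta b v)
}.

Definition YDsubmodule (V : lmodType K) (M : YDmod V) (W : V -> Prop) : Prop :=
  [/\ W 0, (forall u v, W u -> W v -> W (u + v)),
      (forall (a : K) u, W u -> W (a *: u)),
      (forall b u, W u -> W (rho M b u)) &
      (forall b u, W u -> W (delta M b u))].

Definition YDsimple (V : lmodType K) (M : YDmod V) : Prop :=
  forall W : V -> Prop, YDsubmodule M W ->
    ~ ((exists u, W u /\ u <> 0) /\ (exists v, ~ W v)).

End HopfB.

Definition finite_dim (K : fieldType) (V : lmodType K) : Prop :=
  exists s : seq V, forall v : V,
    exists c : 'I_(size s) -> K, v = \sum_(i < size s) c i *: s`_i.

(* Main.v *)
Require Import Defs.
From HB Require Import structures.
From mathcomp Require Import all_boot all_order all_algebra.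
From mathcomp Require Import zify ring.
From Stdlib Require Import Classical.
Import GRing.Theory.
Local Open Scope ring_scope.

Section Comp.
Variables (K : fieldType) (n : nat) (hn : (0 < n)%N) (w : nat) (gamma : K).

Notation o := (ordm hn 0).
Arguments mono : simpl never.
Arguments ordm : simpl never.
Arguments fscale : simpl never.

Lemma ordm0v : nat_of_ord o = 0%N.
Proof. by rewrite /ordm /= mod0n. Qed.

Lemma ordm_val (j : 'I_n) : ordm hn j = j.
Proof. by apply: val_inj; rewrite /ordm /= modn_small. Qed.

Lemma mono_small a b c : (b < n)%N -> (c < n)%N ->
  mono K hn w a b c = [:: (1, (a, ordm hn b, ordm hn c))].
Proof.
move=> hb hc; rewrite /mono !divn_small //= expr0 bin0 mul1r !muln0 !addr0.
by [].
Qed.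

Lemma mulB_x (i : int) (b : Bbasis n) :
  mulB hn w gamma (i, o, o) b = [:: (1, (i + b.1.1, b.1.2, b.2))].
Proof.
case: b => [[i' j'] k'] /=.
rewrite ?ordm0v ?mod0n mul0n expr0 !add0n mono_small // /fscale /= mulr1.
by rewrite !ordm_val.
Qed.

Lemma mulB_xr (i : int) (b : Bbasis n) :
  mulB hn w gamma b (i, o, o) = [:: (1, (b.1.1 + i, b.1.2, b.2))].
Proof.
case: b => [[i' j'] k'] /=.
rewrite ?ordm0v ?mod0n muln0 expr0 !addn0 mono_small // /fscale /= mulr1.
by rewrite !ordm_val.
Qed.

Arguments mulB : simpl never.
Arguments DeltaB : simpl never.

Lemma oneH_eq : oneH K hn w = [:: (1, (0, o, o))].
Proof. by rewrite /oneH mono_small. Qed.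

Lemma xpowH_eq i : xpowH K hn w i = [:: (1, (i, o, o))].
Proof. by rewrite /xpowH mono_small. Qed.

Lemma ftens11 (T U : Type) (a b : K) (x : T) (y : U) :
  ftens [:: (a, x)] [:: (b, y)] = [:: (a * b, (x, y))].
Proof. by []. Qed.

Lemma fmul11 (T : Type) mB (a b : K) (x y : T) :
  fmul mB [:: (a, x)] [:: (b, y)] = [seq (a * b * r.1, r.2) | r <- mB x y].
Proof. by rewrite /fmul /= cats0 cats0. Qed.

Lemma mulBB_eq (x1 x2 y1 y2 : Bbasis n) :
  mulBB hn w gamma (x1, x2) (y1, y2) =
  ftens (mulB hn w gamma x1 y1) (mulB hn w gamma x2 y2).
Proof. by []. Qed.

Lemma DeltaB_x i : DeltaB hn w gamma (i, o, o) =
  [:: (1, ((i, o, o), (i, o, o)))].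
Proof.
rewrite /DeltaB /expHH /fexp ?ordm0v ?mod0n /= /oneHH /DeltaX !oneH_eq !xpowH_eq /=.
rewrite !ftens11 fmul11 mulBB_eq !mulB_xr ftens11 [map _ _]/= fmul11 mulBB_eq !mulB_xr ftens11 /=.
by rewrite !mulr1 !addr0.
Qed.

Lemma Delta2B_x : Delta2B hn w gamma (1, o, o) =
  [:: (1, ((1, o, o), (1, o, o), (1, o, o)))].
Proof. rewrite /Delta2B; erewrite DeltaB_x => /=; erewrite DeltaB_x => /=; by rewrite mulr1. Qed.

Lemma coef_SB_x (b c : Bbasis n) :
  coef (mulH hn w gamma (mulH hn w gamma (bas K (1, o, o)) (bas K b))
          (SB hn w gamma (1, o, o))) c = (b == c)%:R.
Proof.
rewrite /SB ?ordm0v ?mod0n /expH /fexp /= !oneH_eq /mulH /bas fmul11.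
erewrite mulB_x => /=; rewrite fmul11; erewrite mulB_xr => /=.
rewrite xpowH_eq fmul11; erewrite mulB_xr => /=; rewrite fmul11; erewrite mulB_xr => /=.
rewrite /coef unlock /= !mulr1 addr0 add0r addrC addrA addNr add0r.
by case: b => [[? ?] ?] /=; case: eqP; rewrite ?addr0.
Qed.

End Comp.
Arguments mulB : simpl never.
Arguments DeltaB : simpl never.

Set Implicit Arguments. Unset Strict Implicit. Unset Printing Implicit Defensive.

Section Lin.
Variables (K : fieldType) (V : lmodType K) (f : V -> V) (hf : linear f).

Lemma linD u v : f (u + v) = f u + f v.
Proof. by have := hf 1 u v; rewrite !scale1r. Qed.

Lemma lin0 : f 0 = 0.
Proof.
have := hf 1 0 0; rewrite !scale1r addr0 => h.
by apply: (addrI (f 0)); rewrite addr0 -h.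
Qed.

Lemma linZ a u : f (a *: u) = a *: f u.
Proof. by have := hf a u 0; rewrite !addr0 lin0 addr0. Qed.

Lemma linB u v : f (u - v) = f u - f v.
Proof. by have := hf (-1) v u; rewrite !scaleN1r [- v + u]addrC => ->; rewrite addrC. Qed.

Lemma lin_sum (I : Type) (r : seq I) (P : pred I) (F : I -> V) :
  f (\sum_(i <- r | P i) F i) = \sum_(i <- r | P i) f (F i).
Proof. exact: (big_morph f linD lin0). Qed.

End Lin.

Section Act.
Variables (K : fieldType) (V : lmodType K) (T : V -> V) (hT : linear T).

Lemma iter_lin i : linear (iter i T).
Proof.
elim: i => [|i IH] a u v //=.
by rewrite IH (linD hT) (linZ hT).
Qed.

Definition act (p : {poly K}) (u : V) : V :=
  \sum_(i < size p) p`_i *: iter i T u.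

Lemma act_wide N (p : {poly K}) (u : V) : (size p <= N)%N ->
  act p u = \sum_(i < N) p`_i *: iter i T u.
Proof.
move=> hN; rewrite /act (big_ord_widen N (fun i => p`_i *: iter i T u)) //.
rewrite big_mkcond; apply: eq_bigr => i _; case: ifP => // /negbT.
by rewrite -leqNgt => h; rewrite nth_default // scale0r.
Qed.

Arguments act_wide [N] p u.

Lemma act0p u : act 0 u = 0.
Proof. by rewrite /act size_poly0 big_ord0. Qed.

Lemma actD p q u : act (p + q) u = act p u + act q u.
Proof.
set N := maxn (size p) (size q).
rewrite (act_wide (N:=N)) ?(leq_trans (size_polyD _ _)) //.
rewrite (act_wide (N:=N) p) ?leq_maxl // (act_wide (N:=N) q) ?leq_maxr //.
by rewrite -big_split /=; apply: eq_bigr => i _; rewrite coefD scalerDl.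
Qed.

Lemma actC c u : act c%:P u = c *: u.
Proof.
rewrite (act_wide (N:=1)) ?size_polyC ?leq_b1 //.
by rewrite big_ord1 coefC.
Qed.

Lemma actZ c p u : act (c *: p) u = c *: act p u.
Proof.
rewrite (act_wide (N:=size p)) ?size_scale_leq // /act scaler_sumr.
by apply: eq_bigr => i _; rewrite coefZ scalerA.
Qed.

Lemma actMX p u : act (p * 'X) u = act p (T u).
Proof.
have hs : (size (p * 'X)%R <= (size p).+1)%N.
  by have [->|nz] := eqVneq p 0; rewrite ?mul0r ?size_poly0 // size_mulX.
rewrite (act_wide _ _ hs) big_ord_recl coefMX /= scale0r add0r.
by apply: eq_bigr => i _; rewrite coefMX /= add0n -iterS iterSr.
Qed.

Lemma actDv p u v : act p (u + v) = act p u + act p v.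
Proof.
rewrite /act -big_split /=; apply: eq_bigr => i _.
by rewrite (linD (iter_lin i)) scalerDr.
Qed.

Lemma actZv p a u : act p (a *: u) = a *: act p u.
Proof.
rewrite /act scaler_sumr; apply: eq_bigr => i _.
by rewrite (linZ (iter_lin i)) !scalerA mulrC.
Qed.

Lemma act_lin p : linear (act p).
Proof. by move=> a u v; rewrite actDv actZv. Qed.

Lemma act_T p u : T (act p u) = act p (T u).
Proof.
rewrite /act (lin_sum hT); apply: eq_bigr => i _.
by rewrite (linZ hT) -iterSr.
Qed.

Lemma actM p q u : act (p * q) u = act p (act q u).
Proof.
elim/poly_ind: p u => [|p c IH] u; first by rewrite mul0r !act0p.
rewrite mulrDl mulrAC mul_polyC actD actMX IH actZ actD actMX actC.
by rewrite act_T.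
Qed.

Lemma act_Xn d u : act ('X^d) u = iter d T u.
Proof.
elim: d u => [|d IH] u; first by rewrite expr0 -polyC1 actC scale1r.
by rewrite exprSr actMX IH iterSr.
Qed.

Lemma act_sum (I : Type) (r : seq I) (P : pred I) (F : I -> {poly K}) u :
  act (\sum_(i <- r | P i) F i) u = \sum_(i <- r | P i) act (F i) u.
Proof. exact: (big_morph (act^~ u) (fun p q => actD p q u) (act0p u)). Qed.

Lemma actXsubC z u : act ('X - z%:P) u = T u - z *: u.
Proof.
rewrite actD -polyCN actC -(expr1 'X) act_Xn /=.
by rewrite scaleNr.
Qed.

Lemma det_trick (m : nat) (Q : 'M[{poly K}]_m) (e : 'I_m -> V) :
  (forall j, \sum_k act (Q j k) (e k) = 0) -> forall j, act (\det Q) (e j) = 0.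
Proof.
move=> hQ j.
have -> : act (\det Q) (e j) = \sum_k act ((\det Q)%:M j k) (e k).
  rewrite (bigD1 j) //= mxE eqxx mulr1n big1 ?addr0 // => k /negbTE hk.
  by rewrite mxE eq_sym hk mulr0n act0p.
rewrite -mul_adj_mx.
under eq_bigr => k _ do rewrite mxE act_sum.
rewrite exchange_big /= big1 // => l _.
under eq_bigr => k _ do rewrite actM.
by rewrite -(lin_sum (act_lin _)) hQ (lin0 (act_lin _)).
Qed.

Lemma act_scalar (z : K) : (forall u, T u = z *: u) ->
  forall p u, act p u = p.[z] *: u.
Proof.
move=> hz p u.
have hi i : iter i T u = z ^+ i *: u.
  by elim: i => [|i IH] /=; rewrite ?expr0 ?scale1r // IH hz scalerA exprS.
rewrite /act horner_coef scaler_suml; apply: eq_bigr => i _.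
by rewrite hi scalerA.
Qed.

Lemma act_prod_inj (r : seq K) u :
  (forall z y, T y = z *: y -> y = 0) ->
  act (\prod_(z <- r) ('X - z%:P)) u = 0 -> u = 0.
Proof.
move=> hinj; elim: r => [|z r IH].
  by rewrite big_nil -polyC1 actC scale1r.
rewrite big_cons actM actXsubC => h; apply: IH; apply: (hinj z).
by apply/eqP; rewrite -subr_eq0 h.
Qed.

End Act.

Section Mod.
Variables (K : fieldType) (n : nat) (hn : (0 < n)%N) (w : nat) (gamma : K).
Variables (V : lmodType K) (M : YDmod hn w gamma V).

Local Notation o := (ordm hn 0).
Local Notation T := (rho M (1%R, o, o)).

Lemma rho_x i b u : rho M (i, o, o) (rho M b u) = rho M (i + b.1.1, b.1.2, b.2) u.
Proof. by rewrite rho_mul; erewrite mulB_x; rewrite big_cons big_nil scale1r addr0. Qed.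

Lemma rho_xr b i u : rho M b (rho M (i, o, o) u) = rho M (b.1.1 + i, b.1.2, b.2) u.
Proof. by rewrite rho_mul; erewrite mulB_xr; rewrite big_cons big_nil scale1r addr0. Qed.

Lemma T_rho b u : T (rho M b u) = rho M b (T u).
Proof. by rewrite rho_x rho_xr addrC. Qed.

Lemma T_lin : linear T.
Proof. exact: rho_lin. Qed.

Lemma TTinv u : T (rho M (-1, o, o) u) = u.
Proof. by rewrite rho_x /= addrN rho_one. Qed.

Lemma iterT_rho D i j k u :
  iter D T (rho M (i, j, k) u) = rho M (i + D%:Z, j, k) u.
Proof.
elim: D => [|D IH] /=; first by rewrite addr0.
rewrite IH rho_x /=; congr (rho M (_, _, _) u).
rewrite intS; ring.
Qed.

Lemma sum_pred1_seq (s : seq (Bbasis n)) (c : Bbasis n) (F : Bbasis n -> V) :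
  uniq s -> \sum_(b <- s) (b == c)%:R *: F b = if c \in s then F c else 0.
Proof.
elim: s => [|b s IH] /=; first by rewrite big_nil.
case/andP=> bs us; rewrite big_cons IH // in_cons.
have [eq|ne] := eqVneq b c.
  by subst b; rewrite scale1r /= (negbTE bs) addr0.
by rewrite scale0r add0r.
Qed.

Lemma T_delta c u : delta M c (T u) = T (delta M c u).
Proof.
have [s hs] := delta_fin M u.
rewrite (yd_compat _ hs); erewrite Delta2B_x; rewrite big_cons big_nil addr0 /=.
under eq_bigr => b _ do rewrite coef_SB_x mul1r.
rewrite sum_pred1_seq; last by case: hs.
case: ifP => // /negbT cs.
by case: hs => _ h; rewrite h // (lin0 T_lin).
Qed.


Section Span.
Variable v : V.

Inductive spanv : V -> Prop :=
 | sp0 : spanv 0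
 | spg b b' : spanv (rho M b (delta M b' v))
 | spD u u' : spanv u -> spanv u' -> spanv (u + u')
 | spZ (a : K) u : spanv u -> spanv (a *: u).

Lemma spanv_sum (I : Type) (r : seq I) (F : I -> V) :
  (forall i, spanv (F i)) -> spanv (\sum_(i <- r) F i).
Proof.
move=> h; elim: r => [|i r IH]; rewrite ?big_nil ?big_cons; first exact: sp0.
exact: spD.
Qed.

Lemma spanv_rho a u : spanv u -> spanv (rho M a u).
Proof.
elim => [|b b'|u1 u2 _ h1 _ h2|c u1 _ h1].
- by rewrite (lin0 (rho_lin M a)); exact: sp0.
- by rewrite rho_mul; apply: spanv_sum => p; apply: spZ; exact: spg.
- by rewrite (linD (rho_lin M a)); apply: spD.
- by rewrite (linZ (rho_lin M a)); apply: spZ.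
Qed.

Lemma spanv_delta c u : spanv u -> spanv (delta M c u).
Proof.
elim => [|b b'|u1 u2 _ h1 _ h2|a u1 _ h1].
- by rewrite (lin0 (delta_lin M c)); exact: sp0.
- have [s' hs'] := delta_fin M (delta M b' v).
  rewrite (yd_compat _ hs'); apply: spanv_sum => t; apply: spanv_sum => b0.
  apply: spZ; have [s hs] := delta_fin M v.
  rewrite (delta_coass hs) (lin_sum (rho_lin M _)); apply: spanv_sum => b1.
  by rewrite (linZ (rho_lin M _)); apply: spZ; exact: spg.
- by rewrite (linD (delta_lin M c)); apply: spD.
- by rewrite (linZ (delta_lin M c)); apply: spZ.
Qed.

Lemma spanv_v : spanv v.
Proof.
have [s hs] := delta_fin M v; rewrite -(delta_counit hs); apply: spanv_sum => b.
by apply: spZ; have := spg (0, o, o) b; rewrite rho_one.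
Qed.

Lemma spanv_sub : YDsubmodule M spanv.
Proof.
split; [exact: sp0 | exact: spD | exact: spZ | move=> *; exact: spanv_rho |
        move=> *; exact: spanv_delta].
Qed.

Variable s0 : seq (Bbasis n).

Definition gens := [seq rho M (0, x.1, x.2) (delta M b v)
                   | x <- enum (@predT ('I_n * 'I_n)%type), b <- s0].

Definition Wp u := exists (D : nat) (p : 'I_(size gens) -> {poly K}),
  iter D T u = \sum_(k < size gens) act T (p k) gens`_k.

Lemma Wp0 : Wp 0.
Proof.
exists 0%N, (fun _ => 0) => /=; rewrite big1 // => k _; exact: act0p.
Qed.

Lemma WpD u1 u2 : Wp u1 -> Wp u2 -> Wp (u1 + u2).
Proof.
move=> [D1 [p1 h1]] [D2 [p2 h2]].
exists (D1 + D2)%N, (fun k => 'X^D2 * p1 k + 'X^D1 * p2 k).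
rewrite (linD (iter_lin T_lin _)).
have -> : iter (D1 + D2) T u1 = iter D2 T (iter D1 T u1) by rewrite addnC iterD.
rewrite iterD h1 h2 !(lin_sum (iter_lin T_lin _)) -big_split /=.
by apply: eq_bigr => k _; rewrite actD !(actM T_lin) !(act_Xn _).
Qed.

Lemma WpZ a u : Wp u -> Wp (a *: u).
Proof.
move=> [D [p h]]; exists D, (fun k => a *: p k).
rewrite (linZ (iter_lin T_lin _)) h scaler_sumr.
by apply: eq_bigr => k _; rewrite actZ.
Qed.

Hypothesis hs0 : fin_supp (delta M) v s0.

Lemma Wp_gen b b' : Wp (rho M b (delta M b' v)).
Proof.
case: (boolP (b' \in s0)) => hb; last first.
  by case: hs0 => _ h; rewrite h // (lin0 (rho_lin M _)); exact: Wp0.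
case: b => [[i j] k].
set g := rho M (0, j, k) (delta M b' v).
have gin : g \in gens.
  have hx : (j, k) \in enum (@predT ('I_n * 'I_n)%type) by rewrite mem_enum.
  exact: (allpairs_f (fun (x : 'I_n * 'I_n) (b : Bbasis n) =>
                       rho M (0, x.1, x.2) (delta M b v)) hx hb).
have hidx : (index g gens < size gens)%N by rewrite index_mem.
set idx := Ordinal hidx.
have gidx : gens`_idx = g by rewrite /= nth_index.
case: i => a.
- exists 0%N, (fun k => if k == idx then 'X^a else 0) => /=.
  rewrite (bigD1 idx) //= eqxx big1 ?addr0; last first.
    by move=> l /negbTE ->; exact: act0p.
  by rewrite gidx (act_Xn _) iterT_rho add0r.
- exists a.+1, (fun k => if k == idx then 1 else 0) => /=.
  rewrite (bigD1 idx) //= eqxx big1 ?addr0; last first.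
    by move=> l /negbTE ->; exact: act0p.
  rewrite gidx -polyC1 actC scale1r -iterS iterT_rho NegzE addNr. by [].
Qed.

Lemma span_Wp u : spanv u -> Wp u.
Proof.
elim => [|b b'|u1 u2 _ h1 _ h2|a u1 _ h1].
- exact: Wp0.
- exact: Wp_gen.
- exact: WpD.
- exact: WpZ.
Qed.

End Span.

End Mod.

Lemma actN (K : fieldType) (V : lmodType K) (T : V -> V) p u :
  act T (- p) u = - act T p u.
Proof. by rewrite -[- p]scaleN1r actZ scaleN1r. Qed.

Theorem proposition3p1 (K : closedFieldType) (charK : [pchar K] =i pred0)
    (n : nat) (hn : (0 < n)%N) (w : nat) (hw : (0 < w)%N) (gamma : K)
    (hgamma : n.-primitive_root gamma)
    (V : lmodType K) (M : YDmod hn w gamma V) :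
  YDsimple M -> finite_dim V.
Proof.
move=> hsimp.
case: (classic (exists v : V, v <> 0)) => [[v hv]|hz]; last first.
  exists [::] => u; exists (fun _ => 0); rewrite big_ord0.
  by apply: NNPP => h; apply: hz; exists u => e; apply: h.
have [s0 hs0] := delta_fin M v.
have allspan : forall u, spanv M v u.
  move=> u; apply: NNPP => hu; apply: (hsimp _ (spanv_sub M v)); split.
    by exists v; split => //; exact: spanv_v.
  by exists u.
have allW : forall u, Wp M v s0 u := fun u => span_Wp hs0 (allspan u).
set o := ordm hn 0.
set T := rho M (1%R, o, o).
have T_lin : linear T := rho_lin M _.
set gs := gens M v s0.
case: (classic (exists z : K, forall u, T u = z *: u)) => [[z hz]|hnz].
  have z0 : z != 0.
    have hT1 : forall u, T (rho M (-1, o, o) u) = u := TTinv M.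
    by apply/eqP => z0; apply: hv; rewrite -(hT1 v) hz z0 scale0r.
  exists gs => u; have [D [p hp]] := allW u.
  exists (fun k => z ^- D * (p k).[z]).
  have hi : iter D T u = z ^+ D *: u.
    elim: D {hp} => [|D IH]; first by rewrite expr0 scale1r.
    by rewrite iterS IH hz scalerA exprS.
  rewrite hi in hp.
  have -> : u = z ^- D *: (z ^+ D *: u).
    by rewrite scalerA mulVf ?scale1r // expf_neq0.
  rewrite hp scaler_sumr; apply: eq_bigr => k _.
  by rewrite (act_scalar hz) scalerA.
have Trho : forall b u, T (rho M b u) = rho M b (T u) := T_rho M.
have Tdelta : forall c u, delta M c (T u) = T (delta M c u) := T_delta M.
have hinj : forall z y, T y = z *: y -> y = 0.
  move=> z y hy; apply: NNPP => hy0.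
  apply: (hsimp (fun y => T y = z *: y)).
    split.
    - by rewrite (lin0 T_lin) scaler0.
    - by move=> u1 u2 h1 h2; rewrite (linD T_lin) h1 h2 scalerDr.
    - by move=> a u1 h1; rewrite (linZ T_lin) h1 !scalerA mulrC.
    - by move=> b u1 h1; rewrite Trho h1 (linZ (rho_lin M b)).
    - by move=> b u1 h1; rewrite -Tdelta h1 (linZ (delta_lin M b)).
  split; first by exists y.
  have [u hu] := not_all_ex_not _ _ (not_ex_all_not _ _ hnz z).
  by exists u.
have hsurj : forall u, exists u', u = T u' - u'.
  move=> u; apply: NNPP => hu.
  apply: (hsimp (fun y => exists u', y = T u' - u')); last first.
    split; last by exists u.
    have [u0 hu0] := not_all_ex_not _ _ (not_ex_all_not _ _ hnz 1).
    exists (T u0 - u0); split; first by exists u0.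
    by move/eqP; rewrite subr_eq0 => /eqP h; apply: hu0; rewrite scale1r.
  split.
  - by exists 0; rewrite (lin0 T_lin) subr0.
  - move=> u1 u2 [x1 ->] [x2 ->]; exists (x1 + x2).
    by rewrite (linD T_lin) opprD addrACA.
  - move=> a u1 [x1 ->]; exists (a *: x1).
    by rewrite (linZ T_lin) scalerBr.
  - move=> b u1 [x1 ->]; exists (rho M b x1).
    by rewrite (linB (rho_lin M b)) Trho.
  - move=> b u1 [x1 ->]; exists (delta M b x1).
    by rewrite (linB (delta_lin M b)) Tdelta.
have hch : forall j : 'I_(size gs), exists D : nat,
    exists p : 'I_(size gs) -> {poly K},
    iter D T gs`_j = \sum_k act T (('X - 1) * p k) gs`_k.
  move=> j; have [u' eu] := hsurj gs`_j; have [D [p hp]] := allW u'.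
  exists D, p.
  under eq_bigr => k _ do rewrite (actM T_lin).
  rewrite -(lin_sum (act_lin T_lin _)) -hp actXsubC scale1r eu.
  rewrite (linB (iter_lin T_lin D)); congr (_ - _).
  by rewrite -iterS -iterSr.
have [Df hDf] := fin_all_exists hch.
have [pf hpf] := fin_all_exists hDf.
pose Q : 'M[{poly K}]_(size gs) :=
  \matrix_(j, k) ((j == k)%:R * 'X^(Df j) - ('X - 1) * pf j k).
have hQ : forall j, \sum_k act T (Q j k) gs`_k = 0.
  move=> j; under eq_bigr => k _ do rewrite mxE actD actN.
  rewrite big_split /= sumrN -hpf.
  rewrite (bigD1 j) //= eqxx mul1r big1 ?addr0; last first.
    by move=> k; rewrite eq_sym => /negbTE ->; rewrite mul0r act0p.
  by rewrite act_Xn subrr.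
have hdet := det_trick T_lin hQ.
pose P := \det Q.
have P1 : P.[1] = 1.
  have := det_map_mx (horner_eval 1) Q.
  have -> : map_mx (horner_eval 1) Q = 1%:M.
    apply/matrixP => j k; rewrite !mxE /horner_eval.
    by case: eqP => _; rewrite !hornerE /= ?expr1n subrr mul0r ?subr0 ?oppr0 ?addr0 ?mul0r ?mulr0n ?mulr1n.
  by rewrite det1 => h; rewrite [RHS]h.
have allz : forall u : V, u = 0.
  move=> u; have [D [p hp]] := allW u.
  have hP : act T (P * 'X^D) u = 0.
    rewrite (actM T_lin) act_Xn hp (lin_sum (act_lin T_lin _)) big1 // => k _.
    by rewrite -(actM T_lin) mulrC (actM T_lin) hdet (lin0 (act_lin T_lin _)).
  have nz : P * 'X^D != 0.
    rewrite mulf_neq0 //; last by rewrite monic_neq0 ?monicXn.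
    by apply/eqP => e; move: P1; rewrite e horner0 => /eqP; rewrite eq_sym oner_eq0.
  have [r hr] := closed_field_poly_normal (P * 'X^D).
  move: hP; rewrite hr actZ => /eqP; rewrite scaler_eq0 lead_coef_eq0 (negbTE nz) /=.
  by move=> /eqP; exact: (act_prod_inj T_lin hinj).
by case: (hv (allz v)).
Qed.
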